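(* Let $\Omega$ be a metric space and $\tau$ a two-valued measurable cardinal with $|\Omega|\ge\tau$. Then there exist $r>0$ and a subset $Y\subseteq\Omega$ of cardinality $\tau$ such that the metric of $\Omega$ restricted to $Y$ takes only the values $0$ and $r$ (i.e. $d(x,y)=r$ for all distinct $x,y\in Y$).
   Context: A cardinal $\tau$ is two-valued measurable (measurable) if there is a probability measure defined on all subsets of $\tau$, taking only the values $0$ and $1$, vanishing on singletons, whose ideal of null sets is closed under unions of fewer than $\tau$ members. *)

(* Defs.v *)
From Stdlib Require Import Reals.
Open Scope R_scope.

Definition is_metric {X : Type} (d : X -> X -> R) : Prop :=
  (forall x y, 0 <= d x y) /\
  (forall x y, d x y = 0 <-> x = y) /\
  (forall x y, d x y = d y x) /\
  (forall x y z, d x z <= d x y + d y z).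

Definition card_le (A B : Type) : Prop :=
  exists f : A -> B, forall x y, f x = f y -> x = y.
Definition card_lt (A B : Type) : Prop := card_le A B /\ ~ card_le B A.

Definition is_prob_measure_all {T : Type} (mu : (T -> Prop) -> R) : Prop :=
  mu (fun _ => True) = 1 /\
  (forall A, 0 <= mu A) /\
  (forall A : nat -> T -> Prop,
      (forall i j x, i <> j -> A i x -> A j x -> False) ->
      infinite_sum (fun n => mu (A n)) (mu (fun x => exists n, A n x))).

(* The cardinal tau = |T| is two-valued measurable: there is a probability
   measure on all subsets of T, taking only the values 0 and 1, vanishing on
   singletons, whose null ideal is closed under unions of fewer than |T|
   members. *)
Definition two_valued_measurable (T : Type) : Prop :=
  exists mu : (T -> Prop) -> R,
    is_prob_measure_all mu /\
    (forall A, mu A = 0 \/ mu A = 1) /\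
    (forall t : T, mu (fun x => x = t) = 0) /\
    (forall (I : Type) (A : I -> T -> Prop),
        card_lt I T ->
        (forall i, mu (A i) = 0) ->
        mu (fun x => exists i, A i x) = 0).

(* Main.v *)
Require Import Defs.
From Stdlib Require Import Reals Classical FunctionalExtensionality PropExtensionality Lra Lia ClassicalEpsilon.
Open Scope R_scope.
From mathcomp Require classical_sets.

Lemma mu_ext {T : Type} (mu : (T -> Prop) -> R) (A B : T -> Prop) :
  (forall x, A x <-> B x) -> mu A = mu B.
Proof.
intros H. f_equal. apply functional_extensionality. intros x.
apply propositional_extensionality. apply H.
Qed.

Lemma sum_fin (s : nat -> R) l :
  (forall n, (2 <= n)%nat -> s n = 0) -> infinite_sum s l -> l = s 0%nat + s 1%nat.
Proof.
intros H0 Hs. apply (uniqueness_sum s); [exact Hs|].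
intros eps Heps. exists 1%nat. intros n Hn.
assert (E : sum_f_R0 s n = s 0%nat + s 1%nat).
{ induction n as [|n IH]; [lia|].
  destruct n as [|n]; [simpl; reflexivity|].
  simpl sum_f_R0 in *. rewrite IH by lia. rewrite (H0 (S (S n))) by lia. ring. }
rewrite E. unfold R_dist. rewrite Rminus_diag, Rabs_R0. exact Heps.
Qed.

Lemma sum_const1 N : sum_f_R0 (fun _ => 1) N = INR N + 1.
Proof.
induction N as [|N IH]; [simpl; ring|]. simpl sum_f_R0. rewrite IH, S_INR. ring.
Qed.

Section S.
Context {T : Type} (mu : (T -> Prop) -> R) (Hp : is_prob_measure_all mu)
  (H01 : forall A, mu A = 0 \/ mu A = 1).

Lemma mu_empty : mu (fun _ => False) = 0.
Proof.
destruct Hp as [_ [_ Hc]].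
specialize (Hc (fun _ _ => False)). simpl in Hc.
assert (Hs := Hc (fun i j x _ h _ => h)).
rewrite (mu_ext mu (fun x => exists n : nat, False) (fun _ => False)) in Hs
  by (intros x; split; [intros [_ []]|intros []]).
destruct (H01 (fun _ => False)) as [E|E]; [exact E|exfalso].
rewrite E in Hs. destruct (Hs (1/2)) as [N HN]; [lra|].
specialize (HN (S N) ltac:(lia)). rewrite sum_const1 in HN.
unfold R_dist in HN. rewrite S_INR in HN.
assert (0 <= INR N) by apply pos_INR.
rewrite Rabs_right in HN by lra. lra.
Qed.

Lemma mu_add (A B : T -> Prop) : (forall x, A x -> B x -> False) ->
  mu (fun x => A x \/ B x) = mu A + mu B.
Proof.
intros Hd. destruct Hp as [_ [_ Hc]].
set (F := fun n : nat => match n with 0%nat => A | 1%nat => B | _ => fun _ => False end).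
assert (Hs : infinite_sum (fun n => mu (F n)) (mu (fun x => exists n, F n x))).
{ apply Hc. intros i j x Hij. destruct i as [|[|i]]; destruct j as [|[|j]]; simpl;
  try tauto; intros; eauto. }
rewrite (mu_ext mu (fun x => exists n, F n x) (fun x => A x \/ B x)) in Hs.
- apply sum_fin in Hs; [exact Hs|]. intros n Hn. destruct n as [|[|n]]; try lia. apply mu_empty.
- intros x; split.
  + intros [[|[|n]] h]; simpl in h; tauto.
  + intros [h|h]; [exists 0%nat|exists 1%nat]; exact h.
Qed.

Lemma mu_compl (A : T -> Prop) : mu A + mu (fun x => ~ A x) = 1.
Proof.
rewrite <- mu_add by (intros x h1 h2; tauto).
destruct Hp as [H1 _]. rewrite <- H1. apply mu_ext. intros x; split; [tauto|]. intros _; apply classic.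
Qed.

Lemma mu_nonempty (A : T -> Prop) : mu A = 1 -> exists x, A x.
Proof.
intros H. apply NNPP. intros Hn.
rewrite (mu_ext mu A (fun _ => False)) in H.
- rewrite mu_empty in H. lra.
- intros x; split; [intros h; apply Hn; exists x; exact h| intros []].
Qed.

Lemma mu_ge0 A : 0 <= mu A.
Proof. destruct Hp as [_ [H _]]. apply H. Qed.

Lemma mu_mono0 (A B : T -> Prop) : (forall x, B x -> A x) -> mu A = 0 -> mu B = 0.
Proof.
intros Hs H0.
rewrite (mu_ext mu A (fun x => B x \/ (A x /\ ~ B x))) in H0.
- rewrite mu_add in H0 by tauto.
  assert (h1 := mu_ge0 B). assert (h2 := mu_ge0 (fun x => A x /\ ~ B x)). lra.
- intros x; split; [intros h; destruct (classic (B x)); tauto|].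
  intros [h|h]; [auto|tauto].
Qed.

Lemma mu_union0 (A B : T -> Prop) : mu A = 0 -> mu B = 0 -> mu (fun x => A x \/ B x) = 0.
Proof.
intros HA HB.
rewrite (mu_ext mu (fun x => A x \/ B x) (fun x => A x \/ (B x /\ ~ A x))).
- rewrite mu_add by tauto. rewrite HA. rewrite (mu_mono0 B) ; [ring| |exact HB]. tauto.
- intros x; destruct (classic (A x)); tauto.
Qed.

Lemma mu_big_null (A : T -> Prop) : mu A = 1 -> mu (fun x => ~ A x) = 0.
Proof. intros H. assert (h := mu_compl A). lra. Qed.

Lemma mu_null_big (A : T -> Prop) : mu (fun x => ~ A x) = 0 -> mu A = 1.
Proof. intros H. assert (h := mu_compl A). lra. Qed.

Lemma mu_not1 (A : T -> Prop) : mu A <> 1 -> mu A = 0.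
Proof. intros H. destruct (H01 A); tauto. Qed.

Lemma mu_countable0 (A : nat -> T -> Prop) : (forall n, mu (A n) = 0) ->
  mu (fun x => exists n, A n x) = 0.
Proof.
intros H0. destruct Hp as [_ [_ Hc]].
set (B := fun n x => A n x /\ forall k, (k < n)%nat -> ~ A k x).
assert (Hs : infinite_sum (fun n => mu (B n)) (mu (fun x => exists n, B n x))).
{ apply Hc. intros i j x Hij [h1 h2] [h3 h4].
  destruct (Nat.lt_total i j) as [l|[l|l]]; [exact (h4 i l h1)|contradiction|exact (h2 j l h3)]. }
assert (HB : forall n, mu (B n) = 0).
{ intros n. apply (mu_mono0 (A n)); [intros x [h _]; exact h| apply H0]. }
rewrite (mu_ext mu (fun x => exists n, B n x) (fun x => exists n, A n x)) in Hs.
- apply sum_fin in Hs; [rewrite Hs, !HB; ring|]. intros; apply HB.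
- intros x; split; [intros [n [h _]]; exists n; exact h|].
  intros [n h]. revert h. induction n as [n IH] using (well_founded_induction Wf_nat.lt_wf).
  intros h. destruct (classic (exists k, (k < n)%nat /\ A k x)) as [[k [hk1 hk2]]|hn].
  + exact (IH k hk1 hk2).
  + exists n. split; [exact h|]. intros k hk hA. apply hn. exists k; auto.
Qed.

Lemma small_inv (eps : R) : 0 < eps -> exists k : nat, / (INR k + 1) < eps.
Proof.
intros He. destruct (INR_unbounded (/ eps)) as [k Hk]. exists k.
assert (h0 := pos_INR k).
rewrite <- (Rinv_inv eps).
apply Rinv_lt_contravar.
- apply Rmult_lt_0_compat; [apply Rinv_0_lt_compat; lra|lra].
- lra.
Qed.

Lemma ae_const (h : T -> R) : exists r, mu (fun t => h t = r) = 1.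
Proof.
set (P := fun x => mu (fun t => h t <= x) = 1).
assert (Pmono : forall x y, x <= y -> P x -> P y).
{ intros x y Hxy Px. unfold P in *. apply NNPP. intros Hn.
  apply mu_not1 in Hn.
  assert (mu (fun t => h t <= x) = 0) by (apply (mu_mono0 (fun t => h t <= y)); [intros; lra|exact Hn]).
  lra. }
assert (Hn1 : exists n : nat, P (INR n)).
{ apply NNPP. intros Hn.
  assert (E : mu (fun x => exists n : nat, h x <= INR n) = 0).
  { apply mu_countable0. intros n. apply mu_not1. intros E. apply Hn. exists n. exact E. }
  rewrite (mu_ext mu _ (fun _ => True)) in E.
  - destruct Hp as [H1 _]. lra.
  - intros x. split; [auto|]. intros _. destruct (INR_unbounded (h x)) as [n hn]. exists n. lra. }
assert (Hn2 : exists n : nat, ~ P (- INR n)).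
{ apply NNPP. intros Hn.
  assert (E : mu (fun x => exists n : nat, ~ (h x <= - INR n)) = 0).
  { apply mu_countable0. intros n. apply mu_big_null. apply NNPP. intros hh. apply Hn. exists n. exact hh. }
  rewrite (mu_ext mu _ (fun _ => True)) in E.
  - destruct Hp as [H1 _]. lra.
  - intros x. split; [auto|]. intros _. destruct (INR_unbounded (- h x)) as [n hn]. exists n. lra. }
destruct Hn1 as [n1 Hn1]. destruct Hn2 as [n2 Hn2].
destruct (completeness (fun x => ~ P x)) as [r [Hub Hlub]].
{ exists (INR n1). intros x Hx. destruct (Rle_or_lt x (INR n1)) as [l|l]; [exact l|].
  exfalso. apply Hx. apply (Pmono (INR n1)); [lra|exact Hn1]. }
{ exists (- INR n2). exact Hn2. }
assert (Habove : forall x, r < x -> P x).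
{ intros x hx. apply NNPP. intros hn. specialize (Hub x hn). lra. }
assert (Hbelow : forall x, x < r -> ~ P x).
{ intros x hx Px. assert (r <= x); [|lra]. apply Hlub. intros y hy.
  destruct (Rle_or_lt y x) as [l|l]; [exact l|]. exfalso. apply hy. apply (Pmono x); [lra|exact Px]. }
exists r. apply mu_null_big.
rewrite (mu_ext mu _ (fun t => (exists k : nat, ~ (h t <= r + / (INR k + 1))) \/
                                (exists k : nat, h t <= r - / (INR k + 1)))).
- apply mu_union0; apply mu_countable0; intros k;
  assert (0 < / (INR k + 1)) by (apply Rinv_0_lt_compat; assert (h0 := pos_INR k); lra).
  + apply mu_big_null. apply Habove. lra.
  + apply mu_not1. apply Hbelow. lra.
- intros t. split.
  + intros hne. destruct (Rtotal_order (h t) r) as [l|[l|l]]; [right|contradiction|left].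
    * destruct (small_inv (r - h t)) as [k hk]; [lra|]. exists k. lra.
    * destruct (small_inv (h t - r)) as [k hk]; [lra|]. exists k. lra.
  + intros [[k hk]|[k hk]]; assert (0 < / (INR k + 1)) by (apply Rinv_0_lt_compat; assert (h0 := pos_INR k); lra); lra.
Qed.

End S.
Lemma zorn_sets (T : Type) (P : (T -> Prop) -> Prop) :
 (forall F : (T->Prop) -> Prop, (forall X, F X -> P X) ->
   (forall X Y, F X -> F Y -> (forall t, X t -> Y t) \/ (forall t, Y t -> X t)) ->
   P (fun t => exists2 X, F X & X t)) ->
 exists A, P A /\ forall B, (forall t, A t -> B t) -> ~ (forall t, B t -> A t) -> ~ P B.
Proof.
intros H.
destruct (@classical_sets.Zorn_bigcup T P) as [A [PA HA]].
- intros F FP Ftot. apply H; [exact FP| exact Ftot].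
- exists A; split; [exact PA|]. intros B h1 h2. apply HA. split; assumption.
Qed.

Theorem mainTheorem8 (Omega : Type) (d : Omega -> Omega -> R) (T : Type)
  (hd : is_metric d) (htau : two_valued_measurable T)
  (hcard : card_le T Omega) :
  exists (r : R) (Y : Omega -> Prop),
    0 < r /\
    (exists f : T -> Omega,
        (forall s t, f s = f t -> s = t) /\
        (forall y, Y y <-> exists t, f t = y)) /\
    (forall x y, Y x -> Y y -> x <> y -> d x y = r).
Proof.
destruct htau as [mu [Hp [H01 [Hsing Hcl]]]].
destruct hcard as [f finj].
destruct hd as [dpos [dzero [dsym _]]].
set (D := fun s t => d (f s) (f t)).
assert (Hg : forall s, exists r, mu (fun t => D s t = r) = 1)
  by (intros s; apply (ae_const mu Hp H01)).
set (g := fun s => proj1_sig (constructive_indefinite_description _ (Hg s))).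
assert (Hgs : forall s, mu (fun t => D s t = g s) = 1)
  by (intros s; exact (proj2_sig (constructive_indefinite_description _ (Hg s)))).
destruct (ae_const mu Hp H01 g) as [r Hr].
set (W := fun s => g s = r).
assert (HW : forall s, W s -> mu (fun t => D s t = r) = 1).
{ intros s hs. unfold W in hs. rewrite <- hs. apply Hgs. }
assert (rpos : 0 < r).
{ destruct (mu_nonempty mu Hp H01 _ Hr) as [s hs].
  assert (E : mu (fun t => D s t = r /\ t <> s) = 1).
  { apply (mu_null_big mu Hp H01).
    rewrite (mu_ext mu _ (fun t => ~ D s t = r \/ t = s)).
    - apply (mu_union0 mu Hp H01).
      + apply (mu_big_null mu Hp H01). apply HW. exact hs.
      + apply Hsing.
    - intros t. destruct (classic (t = s)); tauto. }
  destruct (mu_nonempty mu Hp H01 _ E) as [t [ht1 ht2]].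
  unfold D in ht1. rewrite <- ht1.
  destruct (Rle_lt_or_eq_dec 0 _ (dpos (f s) (f t))) as [l|l]; [exact l|].
  exfalso. apply ht2. apply finj. symmetry. apply dzero. symmetry. exact l. }
set (P := fun S : T -> Prop => (forall x, S x -> W x) /\
            (forall x y, S x -> S y -> x <> y -> D x y = r)).
destruct (zorn_sets T P) as [S [[SW Seq] Smax]].
{ intros F FP Ftot. split.
  - intros x [X FX Xx]. exact (proj1 (FP X FX) x Xx).
  - intros x y [X FX Xx] [Y FY Yy] hxy.
    destruct (Ftot X Y FX FY) as [h|h].
    + exact (proj2 (FP Y FY) x y (h x Xx) Yy hxy).
    + exact (proj2 (FP X FX) x y Xx (h y Yy) hxy). }
assert (Hbig : card_le T {x | S x}).
{ apply NNPP. intros Hn.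
  assert (Hlt : card_lt {x | S x} T).
  { split; [|exact Hn]. exists (@proj1_sig T S). intros [x hx] [y hy]. simpl. intros ->.
    f_equal. apply proof_irrelevance. }
  set (A := fun (i : {x | S x}) t => ~ D (proj1_sig i) t = r \/ t = proj1_sig i).
  assert (E : mu (fun t => (exists i, A i t) \/ ~ W t) = 0).
  { apply (mu_union0 mu Hp H01).
    - apply Hcl; [exact Hlt|]. intros [x hx]. unfold A; simpl.
      apply (mu_union0 mu Hp H01).
      + apply (mu_big_null mu Hp H01). apply HW. apply SW. exact hx.
      + apply Hsing.
    - apply (mu_big_null mu Hp H01). exact Hr. }
  assert (E2 : mu (fun t => ~ ((exists i, A i t) \/ ~ W t)) = 1).
  { apply (mu_null_big mu Hp H01). rewrite <- E. apply mu_ext. intros t.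
    split; [apply NNPP|tauto]. }
  destruct (mu_nonempty mu Hp H01 _ E2) as [t ht].
  assert (Wt : W t) by (apply NNPP; tauto).
  assert (Ht : forall x (hx : S x), D x t = r /\ t <> x).
  { intros x hx. assert (h := fun H => ht (or_introl (ex_intro _ (exist _ x hx) H))).
    unfold A in h; simpl in h. split; [apply NNPP|]; tauto. }
  apply (Smax (fun x => S x \/ x = t)).
  - intros x hx; left; exact hx.
  - intros hsub. assert (hx := hsub t (or_intror eq_refl)).
    exact (proj2 (Ht t hx) eq_refl).
  - split.
    + intros x [hx| ->]; [exact (SW x hx)|exact Wt].
    + intros x y [hx| ->] [hy| ->] hxy.
      * exact (Seq x y hx hy hxy).
      * exact (proj1 (Ht x hx)).
      * unfold D. rewrite dsym. exact (proj1 (Ht y hy)).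
      * contradiction. }
destruct Hbig as [h hinj].
exists r, (fun y => exists a, f (proj1_sig (h a)) = y).
split; [exact rpos|]. split.
- exists (fun a => f (proj1_sig (h a))). split; [|tauto].
  intros s t E. apply hinj. apply finj in E. destruct (h s) as [x hx], (h t) as [y hy].
  simpl in E. subst y. f_equal. apply proof_irrelevance.
- intros x y [a <-] [b <-] hxy.
  apply (Seq _ _ (proj2_sig (h a)) (proj2_sig (h b))).
  intros E. apply hxy. rewrite E. reflexivity.
Qed.
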